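(* The poset $\mathcal{FP}^c$ of nonempty faces of the Voronoi cell $V^c_O$ of the origin for the lattice of integer cuts $L\subset K$ (with respect to $q$), ordered by inclusion, is isomorphic to the poset $\mathcal{CAC}$ of coherent acyclic orientations of cut subgraphs of $G$.
   Context: $G=(V,E)$ is a finite connected graph (parallel edges allowed); each edge gives oriented edges $e,\bar e$, $\mathbb E$ the set of oriented edges. Real $1$-cochains are $x:\mathbb E\to\mathbb R$ with $x_{\bar e}=-x_e$, with $\langle x,y\rangle=\sum_{e\in E}x_ey_e$ and $q(x)=\langle x,x\rangle$. For $f:V\to\mathbb R$, $d(f)(e)=f(u)-f(v)$ where $u$ is the head and $v$ the tail of $e$. $K=\{d(f): f:V\to\mathbb R\}$ and $L=\{d(f): f:V\to\mathbb Z\}$ (the lattice of integer cuts). $V^c_\lambda=\{x\in K: q(x-\lambda)\le q(x-\mu)\ \forall\mu\in L\}$. A subgraph $H'$ is a cut subgraph if there is a partition $V_1,\dots,V_s$ of $V$ such that $H'$ consists exactly of the edges joining different parts. An orientation of such $H'$ is coherent acyclic if for some such partition defining $H'$ every edge between $V_i$ and $V_j$, $i<j$, is oriented from $V_i$ to $V_j$. $\mathcal{CAC}$ is the set of coherent acyclic orientations of cut subgraphs (including the empty one, $s=1$), with $D_1\preceq D_2$ iff $D_2\subseteq D_1$ (i.e. the subgraph of $D_2$ is contained in that of $D_1$ and the orientations agree). *)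

(* Defs.v *)
From HB Require Import structures.
From mathcomp Require Import all_boot all_order all_algebra.
Set Implicit Arguments. Unset Strict Implicit. Unset Printing Implicit Defensive.
Import Order.TTheory GRing.Theory Num.Theory.
Local Open Scope ring_scope.

(* A finite graph with parallel edges: vertex type V, edge type E, each edge e
   has a head [hd e] and a tail [tl e] (the reference orientation of e; the
   opposite oriented edge is \bar e).  A real 1-cochain is a function
   E -> R giving its value on the reference orientation (x_{\bar e} = - x_e). *)

Definition gadj (V E : finType) (hd tl : E -> V) : rel V :=
  fun u v => [exists e, ((hd e == u) && (tl e == v)) || ((hd e == v) && (tl e == u))].

Definition gconnected (V E : finType) (hd tl : E -> V) : Prop :=
  forall u v : V, connect (gadj hd tl) u v.

Definition cobound (R : realFieldType) (V E : finType) (hd tl : E -> V)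
  (f : V -> R) : E -> R := fun e => f (hd e) - f (tl e).

Definition cinner (R : realFieldType) (E : finType) (x y : E -> R) : R :=
  \sum_(e : E) x e * y e.
Definition cq (R : realFieldType) (E : finType) (x : E -> R) : R := cinner x x.

Definition inK (R : realFieldType) (V E : finType) (hd tl : E -> V) (x : E -> R) : Prop :=
  exists f : V -> R, forall e, x e = cobound hd tl f e.

Definition inL (R : realFieldType) (V E : finType) (hd tl : E -> V) (x : E -> R) : Prop :=
  exists f : V -> int, forall e, x e = cobound hd tl (fun v => (f v)%:~R : R) e.

Definition voronoiO (R : realFieldType) (V E : finType) (hd tl : E -> V) (x : E -> R) : Prop :=
  inK hd tl x /\
  forall mu : E -> R, inL hd tl mu -> cq x <= cq (fun e => x e - mu e).

(* F is a face of the polytope P: the set of points of P maximizing some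
   linear functional <w, .> on P (w = 0 gives P itself). *)
Definition is_face (R : realFieldType) (E : finType) (P F : (E -> R) -> Prop) : Prop :=
  exists w : E -> R,
    forall x, F x <-> (P x /\ forall y, P y -> cinner w y <= cinner w x).

Definition nonempty_face (R : realFieldType) (E : finType) (P F : (E -> R) -> Prop) : Prop :=
  is_face P F /\ exists x, F x.

(* An oriented subgraph: for each edge, None = edge not in the subgraph,
   Some true = oriented from tl e to hd e, Some false = from hd e to tl e. *)
Definition orient (E : finType) := {ffun E -> option bool}.

(* D is a coherent acyclic orientation of a cut subgraph: there is a partition
   V_0, ..., V_{s-1} of V into nonempty parts (vertex v lies in part p v) such
   that the subgraph of D is exactly the set of edges joining different parts,
   each oriented from the part of smaller index to the one of larger index. *)
Definition is_CAC (V E : finType) (hd tl : E -> V) (D : orient E) : Prop :=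
  exists (s : nat) (p : V -> 'I_s),
    (forall i : 'I_s, exists v, p v = i) /\
    forall e, D e = if p (tl e) == p (hd e) then None
                    else Some (p (tl e) < p (hd e))%N.

(* D1 <= D2 iff D2 is contained in D1 (subgraph inclusion + same orientations) *)
Definition cac_le (E : finType) (D1 D2 : orient E) : Prop :=
  forall e, D2 e != None -> D1 e = D2 e.

(* Main.v *)
Require Import Defs.
From HB Require Import structures.
From mathcomp Require Import all_boot all_order all_algebra.
From Stdlib Require Import FunctionalExtensionality ClassicalEpsilon.
Set Implicit Arguments. Unset Strict Implicit. Unset Printing Implicit Defensive.
Import Order.TTheory GRing.Theory Num.Theory.
Local Open Scope ring_scope.

Section S.
Variables (R : realFieldType) (V E : finType) (hd tl : E -> V).

Definition Mc (y : E -> R) := \sum_e `|y e|.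
Definition tight (y x : E -> R) := cinner y x *+ 2 = Mc y.
Notation C := (voronoiO hd tl).
Notation d := (cobound hd tl).

Lemma cinnerC (x y : E -> R) : cinner x y = cinner y x.
Proof. by apply: eq_bigr => e _; rewrite mulrC. Qed.

Lemma cq_sub (x mu : E -> R) :
  cq (fun e => x e - mu e) = cq x - cinner x mu *+ 2 + cq mu.
Proof.
rewrite /cq /cinner -sumrMnl -sumrB -big_split /=; apply: eq_bigr => e _.
by rewrite -!expr2 sqrrB.
Qed.

Lemma vor_bound (x mu : E -> R) : C x -> inL hd tl mu -> cinner mu x *+ 2 <= cq mu.
Proof.
move=> [_ H] Hmu; have := H mu Hmu; rewrite cq_sub cinnerC.
by rewrite -addrA lerDl addrC subr_ge0.
Qed.

Lemma vor_intro (x : E -> R) : inK hd tl x ->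
  (forall mu, inL hd tl mu -> cinner mu x *+ 2 <= cq mu) -> C x.
Proof.
move=> Kx H; split=> // mu Hmu; rewrite cq_sub cinnerC -addrA lerDl addrC subr_ge0.
exact: H.
Qed.

Lemma cinner_d_ortho (y : E -> R) (f : V -> R) :
  cinner y (d f) = \sum_e y e * (f (hd e) - f (tl e)).
Proof. by []. Qed.


Definition chi (b : V -> bool) : V -> R := fun v => (b v)%:R.

Lemma cq_chi (b : V -> bool) : cq (d (chi b)) = Mc (d (chi b)).
Proof.
rewrite /cq /cinner /Mc; apply: eq_bigr => e _; rewrite /cobound /chi.
by case: (b (hd e)); case: (b (tl e)); rewrite /= ?subr0 ?sub0r ?subrr ?mulr0 ?normrN ?normr1 ?mulN1r ?opprK ?mulr1 ?normr0.
Qed.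

Lemma bound_chi (x : E -> R) (b : V -> bool) : C x ->
  cinner (d (chi b)) x *+ 2 <= Mc (d (chi b)).
Proof.
move=> Cx; rewrite -cq_chi; apply: vor_bound => //.
by exists (fun v => (b v : nat)%:Z).
Qed.

Definition lz (p : V -> nat) (j : nat) := d (chi (fun v => (j < p v)%N)).
Definition ly (p : V -> nat) (B : nat) (a : nat -> R) : E -> R :=
  fun e => \sum_(j < B) a j * lz p j e.

Lemma ly_inner p B a x : cinner (ly p B a) x = \sum_(j < B) a j * cinner (lz p j) x.
Proof.
rewrite /cinner /ly; under eq_bigr do rewrite mulr_suml.
rewrite exchange_big /=; apply: eq_bigr => j _; rewrite mulr_sumr.
by apply: eq_bigr => e _; rewrite mulrA.
Qed.

Lemma ly_Mc p B a : (forall j, 0 <= a j) ->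
  Mc (ly p B a) = \sum_(j < B) a j * Mc (lz p j).
Proof.
move=> a0; rewrite /Mc /ly.
rewrite (eq_bigr (fun e => \sum_(j < B) a j * `|lz p j e|)).
  by rewrite exchange_big /=; apply: eq_bigr => j _; rewrite mulr_sumr.
move=> e _.
have [le|lt] := leqP (p (tl e)) (p (hd e)).
  have z0 : forall j, 0 <= lz p j e.
    move=> j; rewrite /lz /cobound /chi subr_ge0 ler_nat.
    case h1: (j < p (tl e))%N; case h2: (j < p (hd e))%N => //=.
    by rewrite (leq_trans h1 le) in h2.
  rewrite ger0_norm; last by apply: sumr_ge0 => j _; apply: mulr_ge0.
  by apply: eq_bigr => j _; rewrite ger0_norm.
have z0 : forall j, lz p j e <= 0.
  move=> j; rewrite /lz /cobound /chi subr_le0 ler_nat.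
  case h1: (j < p (tl e))%N; case h2: (j < p (hd e))%N => //=.
  by rewrite (ltn_trans h2 lt) in h1.
rewrite ler0_norm; last first.
  by apply: sumr_le0 => j _; apply: mulr_ge0_le0.
rewrite -sumrN; apply: eq_bigr => j _; rewrite ler0_norm // mulrN //.
Qed.

Lemma ly_gap p B a x : (forall j, 0 <= a j) ->
  Mc (ly p B a) - cinner (ly p B a) x *+ 2 =
  \sum_(j < B) a j * (Mc (lz p j) - cinner (lz p j) x *+ 2).
Proof.
move=> a0; rewrite ly_Mc // ly_inner -sumrMnl -sumrB; apply: eq_bigr => j _.
by rewrite mulrBr mulrnAr.
Qed.

Lemma ly_bound p B a x : (forall j, 0 <= a j) -> C x ->
  cinner (ly p B a) x *+ 2 <= Mc (ly p B a).
Proof.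
move=> a0 Cx; rewrite -subr_ge0 ly_gap //; apply: sumr_ge0 => j _.
by apply: mulr_ge0 => //; rewrite subr_ge0; apply: bound_chi.
Qed.

Lemma ly_tight p B a x : (forall j, 0 < a j) -> C x ->
  tight (ly p B a) x <-> forall j, (j < B)%N -> tight (lz p j) x.
Proof.
move=> a0 Cx; have a0' : forall j, 0 <= a j by move=> j; apply: ltW.
rewrite /tight; split.
  move=> H j jB; apply/eqP; rewrite eq_sym -subr_eq0; apply/eqP.
  have : Mc (ly p B a) - cinner (ly p B a) x *+ 2 = 0 by rewrite H subrr.
  rewrite ly_gap // => /eqP; rewrite psumr_eq0; last first.
    move=> i _; apply: mulr_ge0 => //; rewrite subr_ge0; exact: bound_chi.
  move/allP => /(_ (Ordinal jB)) /=; rewrite mem_index_enum => /(_ isT).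
  by rewrite mulf_eq0 (gt_eqF (a0 _)) /= => /eqP.
move=> H; apply/eqP; rewrite eq_sym -subr_eq0 ly_gap //; apply/eqP.
by apply: big1 => j _; rewrite H // subrr mulr0.
Qed.


Lemma sum_cut (a : nat -> R) k B :
  \sum_(j < B) a j * ((j < k)%N : nat)%:R = \sum_(j < minn k B) a j.
Proof.
elim: B => [|B IH]; first by rewrite big_ord0 minn0 big_ord0.
rewrite big_ord_recr /= IH.
case: (ltnP B k) => h.
  by rewrite /= mulr1n mulr1 (minn_idPr h) big_ord_recr.
by rewrite /= mulr0n mulr0 addr0 (minn_idPl (leqW h)).
Qed.

Lemma dnat_ly (p : V -> nat) B : (forall v, p v <= B)%N ->
  forall e, d (fun v => (p v)%:R) e = ly p B (fun _ => 1) e.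
Proof.
move=> hB e; rewrite /ly /lz /cobound /chi.
under eq_bigr do rewrite mul1r.
rewrite sumrB.
have h : forall v, (p v)%:R = \sum_(j < B) (((j < p v)%N : nat)%:R : R).
  move=> v; have := sum_cut (fun _ => 1) (p v) B.
  rewrite (minn_idPl (hB v)) sumr_const card_ord.
  by under eq_bigr do rewrite mul1r; move=> ->.
by rewrite !h.
Qed.

Lemma dnat_bound (p : V -> nat) x : C x ->
  cinner (d (fun v => (p v)%:R)) x *+ 2 <= Mc (d (fun v => (p v)%:R)).
Proof.
move=> Cx; set B := \max_v p v.
have hB : forall v, (p v <= B)%N by move=> v; apply: leq_bigmax.
have -> : d (fun v => (p v)%:R) = ly p B (fun _ => 1).
  by apply: functional_extensionality => e; apply: dnat_ly.
by apply: ly_bound => // j; apply: ler01.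
Qed.


Lemma MMt_zero (n m : nat) (N : 'M[R]_(n, m)) : N *m N^T = 0 -> N = 0.
Proof.
move=> H; apply/matrixP => i j; rewrite mxE.
have : (N *m N^T) i i = 0 by rewrite H mxE.
rewrite mxE => /eqP; rewrite psumr_eq0; last first.
  by move=> k _; rewrite mxE -expr2 sqr_ge0.
move/allP => /(_ j); rewrite mem_index_enum => /(_ isT).
by rewrite mxE mulf_eq0 orbb => /eqP.
Qed.

Lemma sub_MMt (n m : nat) (M : 'M[R]_(n, m)) : (M^T <= M *m M^T)%MS.
Proof.
have s1 : (M *m M^T <= M^T)%MS := submxMl _ _.
have [_] := mxrank_leqif_sup s1; move=> <-.
rewrite eqn_leq mxrankS //= mxrank_tr.
have sk : (kermx (M *m M^T) <= kermx M)%MS.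
  apply/sub_kermxP; apply: MMt_zero.
  by rewrite trmx_mul !mulmxA -(mulmxA _ M) mulmx_ker mul0mx.
have := mxrankS sk; rewrite !mxrank_ker => h.
have h1 := rank_leq_row M; have h2 := rank_leq_row (M *m M^T).
rewrite -(subKn h1) -(subKn h2); exact: leq_sub2l.
Qed.

Definition incM : 'M[R]_(#|V|, #|E|) :=
  \matrix_(i, j) ((((hd (enum_val j) == enum_val i) : nat)%:R : R)
                  - ((tl (enum_val j) == enum_val i) : nat)%:R).
Definition rowv (f : V -> R) : 'rV[R]_#|V| := \row_i f (enum_val i).
Definition rowe (w : E -> R) : 'rV[R]_#|E| := \row_j w (enum_val j).

Lemma sum_pick (f : V -> R) (u : V) :
  \sum_(i < #|V|) f (enum_val i) * ((u == enum_val i) : nat)%:R = f u.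
Proof.
rewrite -(big_enum_val (fun v => f v * ((u == v) : nat)%:R)) /=.
rewrite (bigD1 u) //= eqxx mulr1 big1 ?addr0 // => v /negbTE; rewrite eq_sym => ->.
by rewrite mulr0.
Qed.

Lemma rowv_mul (f : V -> R) : rowv f *m incM = rowe (d f).
Proof.
apply/matrixP => i j; rewrite !mxE /cobound.
under eq_bigr do rewrite !mxE mulrBr.
by rewrite sumrB !sum_pick.
Qed.

Lemma cinner_row (w y : E -> R) : cinner w y = (rowe w *m (rowe y)^T) 0 0.
Proof.
rewrite mxE /cinner (big_enum_val (fun e => w e * y e)) /=.
by apply: eq_bigr => j _; rewrite !mxE.
Qed.

Lemma proj (w : E -> R) : exists g : V -> R,
  forall k : V -> R, cinner (fun e => w e - d g e) (d k) = 0.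
Proof.
have : (rowe w *m incM^T <= incM *m incM^T)%MS.
  exact: submx_trans (submxMl _ _) (sub_MMt incM).
case/submxP => X HX.
set g := fun v => X 0 (enum_rank v).
have Hg : X *m incM = rowe (d g).
  rewrite -rowv_mul; congr (_ *m _).
  by apply/matrixP => i j; rewrite !mxE /g enum_valK (ord1 i).
exists g => k; rewrite cinner_row.
have -> : rowe (fun e => w e - d g e) = rowe w - X *m incM.
  by apply/matrixP => i j; rewrite Hg !mxE.
rewrite -rowv_mul trmx_mul mulmxA mulmxBl HX -mulmxA subrr mul0mx mxE.
by [].
Qed.


Lemma intsq (z : int) : `|z%:~R : R| <= z%:~R * z%:~R.
Proof.
have -> : z%:~R * z%:~R = `|z%:~R : R| * `|z%:~R : R|.
  by rewrite -normrM ger0_norm // -expr2 sqr_ge0.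
rewrite -intr_norm -abszE.
change (((`|z|%N)%:R : R) <= (`|z|%N)%:R * (`|z|%N)%:R).
rewrite -natrM ler_nat; case: (absz z) => // n.
by rewrite leq_pmulr.
Qed.

Lemma cinnerBl (x y z : E -> R) :
  cinner (fun e => x e - y e) z = cinner x z - cinner y z.
Proof. by rewrite /cinner -sumrB; apply: eq_bigr => e _; rewrite mulrBl. Qed.

Lemma cinner_half (y : E -> R) (g : V -> R) :
  cinner y (d (fun v => g v / 2)) *+ 2 = cinner y (d g).
Proof.
rewrite /cinner -sumrMnl; apply: eq_bigr => e _; rewrite /cobound.
by rewrite -mulrnAr -mulrBl -mulr_natr -mulrA mulVf ?mulr1 // pnatr_eq0.
Qed.

Lemma attain (f : V -> R) : exists x, C x /\ tight (d f) x /\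
  forall f' : V -> R, tight (d f') x ->
    forall e, d f' e != 0 -> Num.sg (d f' e) = Num.sg (d f e).
Proof.
set s := fun e => Num.sg (d f e).
have [g Hg] := proj s.
have Hgk : forall k, cinner (d g) (d k) = cinner s (d k).
  by move=> k; apply/eqP; rewrite eq_sym -subr_eq0 -cinnerBl; apply/eqP.
have key : forall k, cinner (d k) (d (fun v => g v / 2)) *+ 2 = cinner s (d k).
  by move=> k; rewrite cinner_half cinnerC Hgk.
exists (d (fun v => g v / 2)); split; [|split].
- apply: vor_intro; first by exists (fun v => g v / 2).
  move=> mu [k Hk].
  have -> : mu = d (fun v => (k v)%:~R) by apply: functional_extensionality.
  rewrite key.
  apply: (@le_trans _ _ (\sum_e `|d (fun v => (k v)%:~R) e|)).
    apply: ler_sum => e _.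
    apply: le_trans (ler_norm _) _; rewrite normrM.
    rewrite /s normr_sg.
    by case: (d f e != 0); rewrite /= ?mulr1n ?mulr0n ?mul1r ?mul0r ?lexx ?normr_ge0.
  apply: ler_sum => e _; rewrite /cobound -intrB; exact: intsq.
- rewrite /tight key /Mc /cinner; apply: eq_bigr => e _.
  by rewrite normrEsg.
- move=> f' Hf' e ne.
  have H0 : Mc (d f') - cinner s (d f') = 0 by rewrite -key Hf' subrr.
  have : `|d f' e| - s e * d f' e = 0.
    move: H0; rewrite /Mc /cinner -sumrB => /eqP; rewrite psumr_eq0; last first.
      move=> e' _; rewrite subr_ge0; apply: le_trans (ler_norm _) _.
      rewrite normrM /s normr_sg mulrC.
      by case: (d f e' != 0); rewrite /= ?mulr1n ?mulr0n ?mulr1 ?mulr0 ?lexx ?normr_ge0.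
    move/allP => /(_ e); rewrite mem_index_enum => /(_ isT) /eqP.
    by rewrite mulrC.
  rewrite /s; move: ne; set a := d f' e; set b := d f e => ne.
  case: (ltrgt0P b) => hb.
  + rewrite (gtr0_sg hb) mul1r => /eqP; rewrite subr_eq0 => /eqP ha.
    have : 0 < a by rewrite lt_neqAle eq_sym ne -ha normr_ge0.
    by move=> /gtr0_sg ->.
  + rewrite (ltr0_sg hb) mulN1r opprK => /eqP; rewrite addr_eq0 => /eqP ha.
    have : a < 0 by rewrite lt_neqAle ne -oppr_ge0 -ha normr_ge0.
    by move=> /ltr0_sg ->.
  + rewrite hb sgr0 mul0r subr0 => /eqP; rewrite normr_eq0 => ha.
    by rewrite ha in ne.
Qed.


Definition nr (p : V -> nat) : V -> R := fun v => (p v)%:R.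

Lemma nat_dist_le (a b B : nat) : (a <= B)%N -> (b <= B)%N ->
  `|(a%:R : R) - b%:R| <= B%:R.
Proof.
move=> ha hb; rewrite ler_norml; apply/andP; split.
  apply: (@le_trans _ _ (- b%:R)); first by rewrite lerN2 ler_nat.
  by rewrite -subr_ge0 opprK subrK ler0n.
apply: (@le_trans _ _ a%:R); last by rewrite ler_nat.
by rewrite lerBlDr lerDl.
Qed.

Lemma nat_dist_ge1 (a b : nat) : (a%:R : R) - b%:R != 0 -> 1 <= `|(a%:R : R) - b%:R|.
Proof.
case: (ltngtP a b) => h ne.
- have hw : (a <= b)%N := ltnW h.
  rewrite distrC ger0_norm; last by rewrite subr_ge0 ler_nat.
  rewrite -(natrB _ hw) ler1n subn_gt0; exact: h.
- have hw : (b <= a)%N := ltnW h.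
  rewrite ger0_norm; last by rewrite subr_ge0 ler_nat.
  rewrite -(natrB _ hw) ler1n subn_gt0; exact: h.
- by move: ne; rewrite h subrr eqxx.
Qed.

Lemma ring4 (x1 x2 c y1 y2 : R) :
  (x1 + (c - y1)) - (x2 + (c - y2)) = (x1 - x2) - (y1 - y2).
Proof.
rewrite opprD addrACA; congr (_ + _).
by rewrite [c - y1]addrC addrKA opprK opprB addrC.
Qed.

Lemma cinnerZl (c : R) (y z : E -> R) :
  cinner (fun e => c * y e) z = c * cinner y z.
Proof. by rewrite /cinner mulr_sumr; apply: eq_bigr => e _; rewrite mulrA. Qed.

Lemma transfer (p1 p2 : V -> nat) x : C x ->
  (forall e, d (nr p2) e != 0 -> Num.sg (d (nr p1) e) = Num.sg (d (nr p2) e)) ->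
  tight (d (nr p1)) x -> tight (d (nr p2)) x.
Proof.
move=> Cx Hs T1.
set B := \max_v p2 v.
have hB : forall v, (p2 v <= B)%N by move=> v; apply: leq_bigmax.
set N := B.+1.
set h := fun v => (N * p1 v + (B - p2 v))%N.
have Hd : d (nr h) = fun e => N%:R * d (nr p1) e - d (nr p2) e.
  apply: functional_extensionality => e.
  rewrite /nr /h /cobound [(_ * p1 (hd e) + _)%:R]natrD [(_ * p1 (tl e) + _)%:R]natrD.
  rewrite !natrM !natrB ?hB //.
  by rewrite mulrBr ring4.
have HM : Mc (d (nr h)) = N%:R * Mc (d (nr p1)) - Mc (d (nr p2)).
  rewrite Hd /Mc mulr_sumr -sumrB; apply: eq_bigr => e _.
  set a := d (nr p1) e; set b := d (nr p2) e.
  have hb : `|b| <= B%:R by apply: nat_dist_le.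
  case: (eqVneq b 0) => b0.
    by rewrite b0 subr0 normr0 subr0 normrM normr_nat.
  have sab := Hs e b0.
  have a0 : a != 0.
    apply/negP => /eqP a0; move: sab; rewrite -/a -/b a0 sgr0 => /esym/eqP.
    by rewrite sgr_eq0 (negbTE b0).
  have ha : 1 <= `|a| by apply: nat_dist_ge1.
  have ea : a = Num.sg a * `|a| by rewrite mulr_sg_norm.
  have eb : b = Num.sg a * `|b| by rewrite /a sab mulr_sg_norm.
  rewrite {1}ea {1}eb mulrCA -mulrBr.
  rewrite normrM normr_sg a0 mul1r ger0_norm // subr_ge0.
  apply: le_trans hb _; apply: le_trans (_ : (B%:R : R) <= N%:R) _.
    by rewrite ler_nat.
  by rewrite -[X in X <= _]mulr1 ler_wpM2l.
have UB := dnat_bound h Cx.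
have UB2 := dnat_bound p2 Cx.
rewrite -/(nr h) -/(nr p2) in UB UB2.
move: UB; rewrite HM Hd cinnerBl cinnerZl mulrnBl -mulrnAr T1 lerD2l lerN2 => H.
by apply/eqP; rewrite eq_le H UB2.
Qed.


Lemma rank_dec (g : V -> R) : exists s (p : V -> 'I_s) (c : nat -> R),
  (forall i : 'I_s, exists v, p v = i) /\ (forall v, g v = c (p v)) /\
  (forall j, (j.+1 < s)%N -> c j < c j.+1).
Proof.
set vals := sort <=%O (undup (map g (enum V))).
have uv : uniq vals by rewrite sort_uniq undup_uniq.
have sv : sorted <%O vals by rewrite sort_lt_sorted undup_uniq.
have memv : forall v, g v \in vals.
  by move=> v; rewrite mem_sort mem_undup map_f // mem_enum.
have hi : forall v, (index (g v) vals < size vals)%N.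
  by move=> v; rewrite index_mem.
exists (size vals), (fun v => Ordinal (hi v)), (fun j => nth 0 vals j).
split; [|split].
- move=> i; have : nth 0 vals i \in vals by rewrite mem_nth.
  rewrite mem_sort mem_undup => /mapP [v _ ev].
  by exists v; apply: val_inj => /=; rewrite -ev index_uniq.
- by move=> v /=; rewrite nth_index.
- move=> j hj; rewrite (lt_sorted_ltn_nth 0 sv) ?inE //.
  exact: ltnW.
Qed.


Definition acoef (s : nat) (c : nat -> R) (j : nat) : R :=
  if (j.+1 < s)%N then c j.+1 - c j else 1.

Lemma acoef_gt0 s c : (forall j, (j.+1 < s)%N -> c j < c j.+1) ->
  forall j, 0 < acoef s c j.
Proof.
move=> Hc j; rewrite /acoef; case: ifP => h; last exact: ltr01.
by rewrite subr_gt0 Hc.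
Qed.

Lemma sum_acoef s c k : (k < s)%N ->
  \sum_(j < s.-1) acoef s c j * ((j < k)%N : nat)%:R = c k - c 0%N.
Proof.
move=> ks; rewrite sum_cut (minn_idPl _); last by rewrite -ltnS prednK // (leq_ltn_trans _ ks).
rewrite -(big_mkord xpredT (acoef s c)) -(telescope_sumr c (leq0n k)).
apply: eq_big_nat => j /andP [_ jk]; rewrite /acoef ifT //.
exact: leq_ltn_trans jk ks.
Qed.

Lemma real_ly (g : V -> R) s (p : V -> 'I_s) (c : nat -> R) : (forall v, g v = c (p v)) ->
  d g = ly (fun v => p v) s.-1 (acoef s c).
Proof.
move=> Hg; apply: functional_extensionality => e.
rewrite /ly /lz /cobound /chi.
under eq_bigr do rewrite mulrBr.
rewrite sumrB !sum_acoef // !Hg.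
by rewrite opprB addrA subrK.
Qed.


Definition realizes s (p : V -> 'I_s) (D : orient E) :=
  forall e, D e = if p (tl e) == p (hd e) then None else Some (p (tl e) < p (hd e))%N.

Definition gmap (D : orient E) : (E -> R) -> Prop := fun x =>
  C x /\ forall s (p : V -> 'I_s), realizes p D -> tight (d (nr (fun v => p v))) x.

Definition sgo (o : option bool) : R :=
  match o with None => 0 | Some true => 1 | Some false => -1 end.

Lemma sgo_inj o1 o2 : sgo o1 = sgo o2 -> o1 = o2.
Proof.
have h0 : (-1 : R) < 0 := ltrN10 R.
have h2 : (0 : R) < 1 := ltr01.
have h1 : (-1 : R) < 1 := lt_trans h0 h2.
case: o1 => [[]|]; case: o2 => [[]|] //= => /eqP;
  by rewrite ?(lt_eqF h1) ?(gt_eqF h1) ?(lt_eqF h0) ?(gt_eqF h0)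
            ?(gt_eqF h2) ?(lt_eqF h2).
Qed.

Lemma realizes_sg s (p : V -> 'I_s) D : realizes p D ->
  forall e, Num.sg (d (nr (fun v => p v)) e) = sgo (D e).
Proof.
move=> H e; rewrite H /nr /cobound.
case: (ltngtP (p (tl e)) (p (hd e))) => h.
- rewrite ifF; last by apply/negbTE; rewrite neq_ltn h.
  by rewrite gtr0_sg // subr_gt0 ltr_nat.
- rewrite ifF; last by apply/negbTE; rewrite neq_ltn h orbT.
  by rewrite ltr0_sg // subr_lt0 ltr_nat.
- by rewrite ifT ?h ?subrr ?sgr0 //; apply/eqP/val_inj.
Qed.

Lemma gmap_tight s (p : V -> 'I_s) D : realizes p D ->
  forall x, gmap D x <-> C x /\ tight (d (nr (fun v => p v))) x.
Proof.
move=> Hp x; split=> [[Cx H]|[Cx T]]; first by split => //; apply: H.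
split=> // s' p' Hp'; apply: (transfer Cx _ T) => e _.
by rewrite (realizes_sg Hp) (realizes_sg Hp').
Qed.

Lemma face_char (f : V -> R) :
  (forall x, C x -> cinner (d f) x *+ 2 <= Mc (d f)) ->
  forall x, C x -> ((forall y, C y -> cinner (d f) y <= cinner (d f) x) <-> tight (d f) x).
Proof.
move=> UB x Cx; split.
  move=> H; have [x0 [C0 [T0 _]]] := attain f.
  apply/eqP; rewrite eq_le UB //= -T0.
  by rewrite ler_pMn2r //; apply: H.
move=> T y Cy; rewrite -(@ler_pMn2r _ 2%N) // T; exact: UB.
Qed.

End S.

Theorem mainTheorem12 (R : realFieldType) (V E : finType) (hd tl : E -> V)
  (Vne : (0 < #|V|)%N) (conn : gconnected hd tl) :
  exists g : orient E -> ((E -> R) -> Prop),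
    (forall D, is_CAC hd tl D -> nonempty_face (voronoiO hd tl) (g D)) /\
    (forall F, nonempty_face (voronoiO hd tl) F ->
       exists D, is_CAC hd tl D /\ forall x, F x <-> g D x) /\
    (forall D1 D2, is_CAC hd tl D1 -> is_CAC hd tl D2 ->
       (cac_le D1 D2 <-> forall x, g D1 x -> g D2 x)).
Proof.
exists (@gmap R V E hd tl); split; [|split].
- move=> D [s [p [_ Hp]]].
  have Hr : realizes hd tl p D by [].
  split.
    exists (cobound hd tl (nr R (fun v => p v))) => x.
    rewrite (gmap_tight Hr); split.
      move=> [Cx T]; split=> //.
      by apply/(face_char (fun y Cy => dnat_bound _ Cy) Cx).
    move=> [Cx H]; split=> //.
    by apply/(face_char (fun y Cy => dnat_bound _ Cy) Cx).
  have [x0 [C0 [T0 _]]] := attain hd tl (nr R (fun v => p v)).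
  by exists x0; apply/(gmap_tight Hr).
- move=> F [[w Hw] _].
  have [g Hg] := proj hd tl w.
  have [s [p [c [Hsurj [Hgc Hc]]]]] := rank_dec g.
  pose D : orient E := [ffun e => if p (tl e) == p (hd e) then None
                                   else Some (p (tl e) < p (hd e))%N].
  have Hr : realizes hd tl p D by move=> e; rewrite ffunE.
  exists D; split; first by exists s, p; split.
  have HwK : forall y, inK hd tl y -> cinner w y = cinner (cobound hd tl g) y.
    move=> y [k Hk]; have -> : y = cobound hd tl k by apply: functional_extensionality.
    apply/eqP; rewrite -subr_eq0 -cinnerBl; apply/eqP; exact: Hg k.
  have Hly := real_ly hd tl Hgc.
  have Hp : cobound hd tl (nr R (fun v => p v)) = ly hd tl (fun v => p v) s.-1 (fun _ => 1).
    apply: functional_extensionality; apply: dnat_ly => v.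
    by rewrite -ltnS prednK // (leq_ltn_trans _ (ltn_ord (p v))).
  have a0 := acoef_gt0 Hc.
  have a0' : forall j, 0 <= acoef s c j by move=> j; apply: ltW.
  have UBg : forall y, voronoiO hd tl y ->
      cinner (cobound hd tl g) y *+ 2 <= Mc (cobound hd tl g).
    by move=> y Cy; rewrite Hly; apply: ly_bound.
  have one0 : forall j : nat, (0 : R) < (fun _ => 1) j by move=> j; apply: ltr01.
  move=> x; rewrite Hw (gmap_tight Hr); split.
  + move=> [Cx H]; split=> //.
    have H' : forall y, voronoiO hd tl y ->
        cinner (cobound hd tl g) y <= cinner (cobound hd tl g) x.
      move=> y Cy; rewrite -!HwK; try exact: Cx.1; try exact: Cy.1.
      exact: H.
    have T := (face_char UBg Cx).1 H'.
    rewrite Hly in T; rewrite Hp.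
    by apply/(ly_tight _ _ one0 Cx); apply/(ly_tight _ _ a0 Cx).
  + move=> [Cx T]; split=> //.
    rewrite Hp in T.
    have T' : tight (cobound hd tl g) x.
      by rewrite Hly; apply/(ly_tight _ _ a0 Cx); apply/(ly_tight _ _ one0 Cx).
    move=> y Cy; rewrite !HwK; try exact: Cx.1; try exact: Cy.1.
    by apply: (face_char UBg Cx).2.
- move=> D1 D2 [s1 [p1 [_ H1]]] [s2 [p2 [_ H2]]].
  have R1 : realizes hd tl p1 D1 by [].
  have R2 : realizes hd tl p2 D2 by [].
  split.
  + move=> Hle x; rewrite (gmap_tight R1) (gmap_tight R2) => [[Cx T]]; split=> //.
    apply: (transfer Cx _ T) => e ne.
    rewrite (realizes_sg R R1) (realizes_sg R R2).
    have : D2 e != None.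
      apply/eqP => h; move: ne; rewrite -sgr_eq0 (realizes_sg R R2) h /=.
      by rewrite eqxx.
    by move/Hle ->.
  + move=> Hsub e ne.
    have [x0 [C0 [T0 Hsg]]] := attain hd tl (nr R (fun v => p1 v)).
    have : gmap hd tl D2 x0 by apply: Hsub; apply/(gmap_tight R1).
    move/(gmap_tight R2) => [_ T2].
    have nz : cobound hd tl (nr R (fun v => p2 v)) e != 0.
      rewrite -sgr_eq0 (realizes_sg R R2); move: ne; case: (D2 e) => // [[]] _ /=.
        exact: oner_neq0.
      by rewrite oppr_eq0 oner_neq0.
    have := Hsg _ T2 e nz; rewrite (realizes_sg R R2) (realizes_sg R R1) => h.
    exact: (sgo_inj (esym h)).
Qed.
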